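(* For $k\in\mathbb{N}\cup\{0\}$ let $W_k,Z_k$ be Banach spaces such that (i) $Z_k$ is compactly embedded in $W_k$, and (ii) for each $\varepsilon>0$, $\kappa_\varepsilon=\sup_{k\ge0}\mathcal{N}_\varepsilon(B_{Z_k},W_k)<\infty$. Let $\mathcal{B}_k\subset W_k$ be sets and $U^k:\mathcal{B}_k\to\mathcal{B}_{k-1}$ ($k\ge1$) maps such that (iii) each $\mathcal{B}_k$ is compact in $W_k$; (iv) $\sup_{k\ge0}\|\mathcal{B}_k\|_{W_k}=Q_1<\infty$; (v) $U^k(\mathcal{B}_k)=\mathcal{B}_{k-1}$; (vi) there is a decomposition $U^k(z)=P^k(z)+N^k(z)$ and constants $0<\varrho<\frac14$, $Q_2>0$ such that for all $z^1,z^2\in\mathcal{B}_k$, $$\|P^k(z^1)-P^k(z^2)\|_{W_{k-1}}\le\varrho\|z^1-z^2\|_{W_k},\qquad \|N^k(z^1)-N^k(z^2)\|_{Z_{k-1}}\le Q_2\|z^1-z^2\|_{W_k}.$$ Then $$\dim_{W_0}\mathcal{B}_0\le\frac{\log_2\kappa_{\varrho Q_2^{-1}}}{\log_2\frac{1}{4\varrho}}.$$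
   Context: For a Banach space $W$, $B_W$ denotes its closed unit ball and $B_W(\varepsilon,x)=x+\varepsilon B_W$. For $K\subset W$ (relatively) compact, $\mathcal{N}_\varepsilon(K,W)$ is the minimal number of $\varepsilon$-balls of $W$ covering $K$; here $B_{Z_k}$ is regarded as a subset of $W_k$. The fractal dimension of a compact $K\subset W$ is $\dim_WK=\limsup_{\varepsilon\to0^+}\frac{\log\mathcal{N}_\varepsilon(K,W)}{\log(1/\varepsilon)}$. $\|D\|_W=\sup_{z\in D}\|z\|_W$. In (vi), $P^k,N^k$ map $\mathcal{B}_k$ into $W_{k-1}$, and the differences $N^k(z^1)-N^k(z^2)$ lie in $Z_{k-1}$. *)

(* Defs.v *)
From HB Require Import structures.
From mathcomp Require Import all_boot all_order all_algebra.
From mathcomp Require Import all_classical all_reals all_analysis.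
Set Implicit Arguments. Unset Strict Implicit. Unset Printing Implicit Defensive.
Import Order.TTheory GRing.Theory Num.Theory.
Import numFieldNormedType.Exports.
Local Open Scope classical_set_scope.
Local Open Scope ring_scope.

Definition cball {R : realType} {W : normedModType R} (x : W) (eps : R) : set W :=
  [set y | `|y - x| <= eps].

Definition eps_cover {R : realType} {W : normedModType R} (K : set W) (eps : R)
  (s : seq W) : Prop :=
  K `<=` \bigcup_(c in [set` s]) cball c eps.

Definition covnum {R : realType} {W : normedModType R} (K : set W) (eps : R) : \bar R :=
  ereal_inf [set ((size s)%:R)%:E | s in [set s : seq W | eps_cover K eps s]].

Definition log2 {R : realType} (x : R) : R := ln x / ln 2.

Definition fdim {R : realType} {W : normedModType R} (K : set W) : \bar R :=
  limf_esup (fun eps : R => (log2 (fine (covnum K eps)) / log2 (1 / eps))%:E) 0^'+.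

Definition emb_ball {R : realType} {Z W : normedModType R} (f : Z -> W) : set W :=
  f @` [set z | `|z| <= 1].

(* Main.v *)
Require Import Defs.
From HB Require Import structures.
From mathcomp Require Import all_boot all_order all_algebra.
From mathcomp Require Import all_classical all_reals all_analysis.
From mathcomp Require Import ring lra.
Import Order.TTheory GRing.Theory Num.Theory.
Import numFieldNormedType.Exports.
Local Open Scope classical_set_scope.
Local Open Scope ring_scope.

Section Cov.
Variables (R : realType) (W : normedModType R).

Lemma covnum_le (A : set W) eps s : eps_cover A eps s ->
  (covnum A eps <= (size s)%:R%:E)%E.
Proof. by move=> h; apply: ereal_inf_lbound; exists s. Qed.

Lemma covnum_ge0 (A : set W) eps : (0 <= covnum A eps)%E.
Proof. by apply: le_ereal_inf_tmp => _ [s _ <-]; rewrite lee_fin ler0n. Qed.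

Lemma covnum_attain (A : set W) eps (x : R) : (covnum A eps <= x%:E)%E ->
  exists s, eps_cover A eps s /\ (size s)%:R <= x.
Proof.
move=> hx.
have ex : exists n, `[< exists s, eps_cover A eps s /\ size s = n >].
  apply: contrapT => hne.
  have : covnum A eps = +oo%E.
    rewrite /covnum; suff -> : [set (((size s)%:R : R))%:E | s in
      [set s : seq W | eps_cover A eps s]] = set0 by rewrite ereal_inf0.
    apply: funext => y; apply: propext; split => // -[s hs _]; apply: hne.
    by exists (size s); apply/asboolP; exists s.
  by move=> h; move: hx; rewrite h.
case: (ex_minnP ex) => n /asboolP [s [hs <-]] hmin.
exists s; split => //.
suff : ((size s)%:R%:E <= covnum A eps)%E by move=> h; rewrite -lee_fin (le_trans h).
apply: le_ereal_inf_tmp => _ [s' hs' <-]; rewrite lee_fin ler_nat.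
by apply: hmin; apply/asboolP; exists s'.
Qed.

Lemma eps_cover_mono (A : set W) e1 e2 s : e1 <= e2 -> eps_cover A e1 s -> eps_cover A e2 s.
Proof.
move=> he h x /h [c hc hx]; exists c => //; rewrite /cball /=.
by apply: le_trans he; exact: hx.
Qed.

End Cov.

Lemma zid (M : zmodType) (a b c d e : M) :
  (a + b) - ((c + d) + e) = (a - c) + ((b - d) - e).
Proof. by rewrite !opprD !addrA; congr (_ - _ - _); rewrite addrAC. Qed.

Section Step.
Variables (R : realType) (V V' Zt : normedModType R) (jj : {linear Zt -> V'})
  (Bs : set V) (UU PP NN : V -> V') (rho Q2 : R) (cs : seq V').
Hypotheses (hrho : 0 < rho) (hQ2 : 0 < Q2) (hcs : eps_cover (emb_ball jj) (rho/Q2) cs)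
  (hUPN : forall z, Bs z -> UU z = PP z + NN z)
  (hP : forall z1 z2, Bs z1 -> Bs z2 -> `|PP z1 - PP z2| <= rho * `|z1 - z2|)
  (hN : forall z1 z2, Bs z1 -> Bs z2 ->
     exists y : Zt, jj y = NN z1 - NN z2 /\ `|y| <= Q2 * `|z1 - z2|).

Lemma core z z0 r : 0 < r -> Bs z -> Bs z0 -> `|z - z0| <= 2 * r ->
  exists2 ci, ci \in cs & `|UU z - (UU z0 + (2 * Q2 * r) *: ci)| <= 4 * rho * r.
Proof.
move=> r0 Bz Bz0 hzz.
have [y [jy ny]] := hN _ _ Bz Bz0.
have t0 : 0 < 2 * Q2 * r by rewrite !mulr_gt0.
have : emb_ball jj (jj ((2 * Q2 * r)^-1 *: y)).
  exists ((2 * Q2 * r)^-1 *: y) => //=.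
  rewrite normrZ normfV (gtr0_norm t0) ler_pdivrMl // mulr1.
  apply: (le_trans ny); have -> : 2 * Q2 * r = Q2 * (2 * r) by ring.
  by rewrite ler_pM2l.
case/hcs => ci hci hd; exists ci => //.
have e1 : UU z - (UU z0 + (2 * Q2 * r) *: ci) =
  (PP z - PP z0) + (2 * Q2 * r) *: (jj ((2 * Q2 * r)^-1 *: y) - ci).
  rewrite linearZ /= scalerBr scalerA mulfV ?gt_eqF // scale1r jy hUPN // hUPN //.
  exact: zid.
rewrite e1; apply: (le_trans (ler_normD _ _)).
rewrite normrZ (gtr0_norm t0).
have h1 : `|PP z - PP z0| <= 2 * rho * r.
  apply: (le_trans (hP _ _ Bz Bz0)); have -> : 2 * rho * r = rho * (2 * r) by ring.
  by rewrite ler_pM2l.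
have h2 : 2 * Q2 * r * `|jj ((2 * Q2 * r)^-1 *: y) - ci| <= 2 * rho * r.
  move: hd; rewrite /cball /= => hd.
  have := (ler_wpM2l (ltW t0) hd).
  move=> h3; apply: (le_trans h3); rewrite le_eqVlt; apply/orP; left; apply/eqP.
  by field; rewrite gt_eqF.
have -> : 4 * rho * r = 2 * rho * r + 2 * rho * r by ring.
exact: lerD.
Qed.

Lemma step s : forall r (A : set V), 0 < r -> A `<=` Bs -> eps_cover A r s ->
  exists s', eps_cover (UU @` A) (4 * rho * r) s' /\ (size s' <= size s * size cs)%N.
Proof.
elim: s => [|c s IH] r A r0 AB hc.
  by exists [::]; split => // y [z Az _]; case: (hc z Az).
have [s2 [h2 hs2]] := IH r [set z | A z /\ (\bigcup_(c in [set` s]) cball c r) z] r0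
  (fun z h => AB z h.1) (fun z h => h.2).
case: (pselect (exists z0, A z0 /\ cball c r z0)) => [[z0 [Az0 cz0]]|hno].
  exists (map (fun ci => UU z0 + (2 * Q2 * r) *: ci) cs ++ s2); split; last first.
    by rewrite size_cat size_map /= mulSn leq_add2l.
  move=> y [z Az <-]; case: (hc z Az) => c'; rewrite /= inE => /orP [/eqP ->|hc'] hzc.
    have := @core z z0 r r0 (AB z Az) (AB z0 Az0).
    case.
      have -> : z - z0 = (z - c) - (z0 - c) by rewrite opprB addrA subrK.
      apply: (le_trans (ler_normB _ _)); have -> : 2 * r = r + r by ring. apply: lerD => //.
    move=> ci hci hd; exists (UU z0 + (2 * Q2 * r) *: ci) => //=.
    by rewrite mem_cat; apply/orP; left; apply/mapP; exists ci.
  have [c2 hc2 hz2] : (\bigcup_(c in [set` s2]) cball c (4 * rho * r)) (UU z).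
    by apply: h2; exists z => //; split => //; exists c'.
  by exists c2 => //=; rewrite mem_cat hc2 orbT.
exists s2; split; last by rewrite /= mulSn (leq_trans hs2) // leq_addl.
move=> y [z Az <-]; case: (hc z Az) => c'; rewrite /= inE => /orP [/eqP ->|hc'] hzc.
  by exfalso; apply: hno; exists z.
by apply: h2; exists z => //; split => //; exists c'.
Qed.

End Step.

Lemma exn (R : realType) (a e : R) : 0 < a -> a < 1 -> 0 < e -> exists n, a ^+ n < e.
Proof.
move=> a0 a1 e0.
have : (GRing.exp a : R^nat) x @[x --> \oo] --> 0 by apply: cvg_expr; rewrite gtr0_norm.
move/cvgr0Pnorm_lt => /(_ e e0) [N _ hN].
by exists N; have := hN N (leqnn N); rewrite /= gtr0_norm // exprn_gt0.
Qed.

Lemma aux_ly (R : realType) (le la q : R) (m : nat) :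
  le < la *+ m + q -> m%:R * (- la) - q < - le.
Proof. rewrite -mulr_natl => h; nra. Qed.

Lemma aux_final (R : realType) (lx y u dl D q mR : R) : 0 <= u -> 0 < dl -> 0 < D ->
  lx <= (mR + 1) * (u * D) -> mR * D - q < y ->
  u * D + u * q + dl * q < mR * (dl * D) -> q + 1 < mR * D -> lx / y <= u + dl.
Proof.
move=> u0 dl0 D0 h1 hy hT hT2.
have y0 : 0 < y by lra.
rewrite ler_pdivrMr //.
have h2 : (mR + 1) * (u * D) <= (u + dl) * (mR * D - q) by nra.
have h3 : (u + dl) * (mR * D - q) <= (u + dl) * y.
  by apply: ler_wpM2l; lra.
lra.
Qed.

Theorem lemma6p2 (R : realType)
  (W Z : nat -> completeNormedModType R)
  (j : forall k, {linear Z k -> W k})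
  (* (i) Z_k compactly embedded in W_k *)
  (hj_inj : forall k, injective (j k))
  (hj_cont : forall k, continuous (j k))
  (hj_cpt : forall k, compact (closure (emb_ball (j k))))
  (* (ii) kappa_eps finite *)
  (hkappa : forall eps : R, 0 < eps ->
     (ereal_sup (range (fun k => covnum (emb_ball (j k)) eps)) < +oo)%E)
  (B : forall k, set (W k))
  (U P N : forall k, W k.+1 -> W k)
  (* (iii) *)
  (hB_cpt : forall k, compact (B k))
  (* (iv) *)
  (Q1 : R) (hQ1 : forall k (x : W k), B k x -> `|x| <= Q1)
  (* (v) *)
  (hU : forall k, U k @` B k.+1 = B k)
  (* (vi) *)
  (rho Q2 : R) (hrho0 : 0 < rho) (hrho1 : rho < 1/4) (hQ2 : 0 < Q2)
  (hUPN : forall k z, B k.+1 z -> U k z = P k z + N k z)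
  (hP : forall k z1 z2, B k.+1 z1 -> B k.+1 z2 ->
     `|P k z1 - P k z2| <= rho * `|z1 - z2|)
  (hN : forall k z1 z2, B k.+1 z1 -> B k.+1 z2 ->
     exists y : Z k, j k y = N k z1 - N k z2 /\ `|y| <= Q2 * `|z1 - z2|) :
  (fdim (B 0%N) <=
    (log2 (fine (ereal_sup (range (fun k =>
        covnum (emb_ball (j k)) (rho / Q2)))))
     / log2 (1 / (4 * rho)))%R%:E)%E.
Proof.
set kap := ereal_sup _.
have rq0 : 0 < rho / Q2 by rewrite divr_gt0.
have kap_ge : forall k, (covnum (emb_ball (j k)) (rho / Q2) <= kap)%E.
  by move=> k; apply: ereal_sup_ubound; exists k.
have kfin : kap \is a fin_num.
  rewrite ge0_fin_numE; first exact: hkappa.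
  apply: le_trans (kap_ge 0%N); exact: covnum_ge0.
set K := fine kap.
have kapE : kap = K%:E by rewrite /K fineK.
have hcs : forall k, exists cs, eps_cover (emb_ball (j k)) (rho / Q2) cs /\ (size cs)%:R <= K.
  by move=> k; apply: covnum_attain; rewrite -kapE.
have K1 : 1 <= K.
  have [cs [hc hsz]] := hcs 0%N.
  have : emb_ball (j 0%N) 0 by exists 0; [rewrite /= normr0 ler01 | rewrite raddf0].
  case/hc => c hc' _; apply: (le_trans _ hsz); rewrite ler1n; move: hc'.
  by case: (cs).
set a := 4 * rho.
have a0 : 0 < a by rewrite /a mulr_gt0.
have a1 : a < 1 by rewrite /a; lra.
set Q := Num.max Q1 1.
have Q0 : 0 < Q by rewrite /Q lt_max ltr01 orbT.
have iter : forall n k, exists s : seq (W k), eps_cover (B k) (a ^+ n * Q) s /\ (size s)%:R <= K ^+ n.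
  elim=> [|n IH] k.
    exists [:: 0]; split; last by rewrite expr0.
    move=> x Bx; exists 0; first by rewrite /= inE.
    by rewrite /cball /= subr0 expr0 mul1r (le_trans (hQ1 _ _ Bx)) // le_max lexx.
  have [s [hs hsz]] := IH k.+1.
  have [cs [hc hcsz]] := hcs k.
  have r0 : 0 < a ^+ n * Q by rewrite mulr_gt0 // exprn_gt0.
  have [s' [hs' hsz']] := @step R (W k.+1) (W k) (Z k) (j k) (B k.+1) (U k) (P k) (N k) rho Q2 cs hrho0 hQ2 hc (hUPN k) (hP k) (hN k) s _ _ r0 (@subset_refl _ _) hs.
  exists s'; split.
    by move: hs'; rewrite hU exprS /a !mulrA.
  apply: (le_trans (y := ((size s * size cs)%N)%:R)); first by rewrite ler_nat.
  by rewrite natrM exprSr ler_pM // ler0n.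
have l20 : 0 < ln (2 : R) by apply: ln_gt0; rewrite ltr1n.
set L := ln K.
have L0 : 0 <= L by apply: ln_ge0.
set D := ln (1 / a).
have D0 : 0 < D by apply: ln_gt0; rewrite ltr_pdivlMr // mul1r.
set q := ln Q.
set u := L / D.
have u0 : 0 <= u by rewrite divr_ge0 // ltW.
have cE : log2 K / log2 (1 / a) = u.
  by rewrite /log2 /u -/L -/D; field; rewrite !gt_eqF.
rewrite cE /fdim.
apply/lee_addgt0Pr => dl dl0.
set T := (u * D + u * q + dl * q) / (dl * D).
set T2 := (q + 1) / D.
set M := Num.Def.archi_bound (Num.max 0 (Num.max T T2)).
have hM : Num.max 0 (Num.max T T2) < M%:R by apply: archi_boundP; rewrite le_max lexx.
have MT : T < M%:R by apply: le_lt_trans hM; rewrite !le_max lexx !orbT.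
have MT2 : T2 < M%:R by apply: le_lt_trans hM; rewrite !le_max lexx !orbT.
set e0 := Num.min 1 (a ^+ M * Q).
have e00 : 0 < e0 by rewrite lt_min ltr01 mulr_gt0 // exprn_gt0.
have bound : forall eps, 0 < eps -> eps < e0 ->
    log2 (fine (covnum (B 0%N) eps)) / log2 (1 / eps) <= u + dl.
  move=> eps eps0 epse.
  have eps1 : eps < 1 by apply: (lt_le_trans epse); rewrite ge_min lexx.
  have epsM : eps < a ^+ M * Q by apply: (lt_le_trans epse); rewrite ge_min lexx orbT.
  have ex : exists n, a ^+ n * Q <= eps.
    have [n hn] := @exn R a (eps / Q) a0 a1 (divr_gt0 eps0 Q0).
    by exists n; rewrite -ler_pdivlMr // ltW.
  case: (ex_minnP ex) => n0 hn0 hmin.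
  case: n0 hn0 hmin => [|m] hn0 hmin.
    exfalso; move: hn0; rewrite expr0 mul1r => hQe.
    have : a ^+ M * Q <= Q by apply: ler_piMl; [exact: ltW | exact: exprn_ile1 (ltW a0) (ltW a1)].
    by move=> h; have := le_lt_trans hQe (lt_le_trans epsM h); rewrite ltxx.
  have hm : eps < a ^+ m * Q.
    rewrite ltNge; apply/negP => h; have := hmin m h; by rewrite ltnn.
  have Mm : (M <= m)%N.
    rewrite leqNgt; apply/negP => hlt.
    have : a ^+ M <= a ^+ m.+1 by rewrite ler_iXn2l.
    move=> h; have : a ^+ M * Q <= a ^+ m.+1 * Q by rewrite ler_pM2r.
    by move=> h'; have := lt_le_trans epsM (le_trans h' hn0); rewrite ltxx.
  have [s [hs hsz]] := iter m.+1 0%N.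
  have hs' := @eps_cover_mono R (W 0%N) (B 0%N) _ _ s hn0 hs.
  have cle := @covnum_le R (W 0%N) (B 0%N) eps s hs'.
  have c0 := @covnum_ge0 R (W 0%N) (B 0%N) eps.
  have cfin : covnum (B 0%N) eps \is a fin_num.
    by rewrite ge0_fin_numE // (le_lt_trans cle) // ltry.
  set x := fine (covnum (B 0%N) eps).
  have x0 : 0 <= x by rewrite /x fine_ge0.
  have xK : x <= K ^+ m.+1.
    apply: le_trans hsz; rewrite /x -lee_fin fineK //.
  have lx : ln x <= m.+1%:R * L.
    case: (leP x 0) => hx.
      by rewrite ln0 // mulr_ge0.
    apply: (@le_trans _ _ (ln (K ^+ m.+1))).
      by rewrite ler_ln // posrE exprn_gt0 // (lt_le_trans ltr01 K1).
    by rewrite lnXn ?(lt_le_trans ltr01 K1) // mulr_natl.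
  have ly : m%:R * D - q < ln (1 / eps).
    rewrite div1r lnV ?posrE // /D div1r lnV ?posrE // /q.
    have : ln eps < ln (a ^+ m * Q).
      by rewrite ltr_ln // posrE mulr_gt0 // exprn_gt0.
    rewrite lnM ?posrE ?exprn_gt0 // lnXn //; exact: aux_ly.
  have mR : M%:R <= m%:R :> R by rewrite ler_nat.
  have hT : u * D + u * q + dl * q < m%:R * (dl * D).
    by rewrite -ltr_pdivrMr ?mulr_gt0 //; apply: (lt_le_trans MT mR).
  have hT2 : q + 1 < m%:R * D.
    by rewrite -ltr_pdivrMr //; apply: (lt_le_trans MT2 mR).
  have -> : log2 x / log2 (1 / eps) = ln x / ln (1 / eps).
    have y0 : 0 < ln (1 / eps) by apply: ln_gt0; rewrite ltr_pdivlMr // mul1r.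
    by rewrite /log2; field; rewrite !gt_eqF.
  have LE : L = u * D by rewrite /u divfK // gt_eqF.
  have h1 : ln x <= (m%:R + 1) * (u * D) by rewrite -LE natr1.
  exact: (@aux_final R _ _ _ _ _ _ _ u0 dl0 D0 h1 ly hT hT2).
rewrite limf_esupE.
set V := [set eps : R | 0 < eps] `&` [set eps | eps < e0].
have hV : (0:R)^'+ V.
  by apply: filterI; [exact: nbhs_right_gt | exact: nbhs_right_lt].
apply: (le_trans (@ereal_inf_lbound _ _ (ereal_sup ((fun eps : R => (log2 (fine (covnum (B 0%N) eps)) / log2 (1 / eps))%:E) @` V)) _)).
  by exists V.
apply: ge_ereal_sup => _ [eps [h1 h2] <-].
by rewrite -EFinD lee_fin; apply: bound.
Qed.
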